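(* Assume $\mathrm{recc}(C)\subseteq\mathrm{recc}(P^B)$. Fix $k\in N_2$ and assume $N_0\not\subseteq J$. Let $S\subseteq M'$. Then every $x\in P^B\setminus S_k^C$ satisfies $$\sum_{i\in S}x_i-\sum_{j\in N\setminus J}\frac{x_j}{\varepsilon'_j(S)}\le0.$$
   Context: Let $A\in\mathbb{R}^{m\times n}$ have full row rank, $b\in\mathbb{R}^m$, and $P=\{x\in\mathbb{R}^n_+:Ax=b\}$. Let $C\subseteq\mathbb{R}^n$ be an open convex set. Fix a basis $B$ of $P$ with nonbasic set $N=\{1,\dots,n\}\setminus B$. Write $P=\{x:x_i=\bar b_i-\sum_{j\in N}\bar a_{ij}x_j\ (i\in B),\ x\ge0\}$ with $\bar b\ge0$. The basic solution $\bar x$ has $\bar x_i=\bar b_i$ ($i\in B$) and $0$ ($i\in N$). $P^B$ is obtained by dropping $x_i\ge0$ for $i\in B$. For $j\in N$, $\bar r^j$ has $\bar r^j_k=-\bar a_{kj}$ ($k\in B$), $\bar r^j_j=1$, and $0$ otherwise. Thus $P^B=\{\bar x+\sum_{j\in N}x_j\bar r^j:x_j\ge0\}$, and for $x\in P^B$ the $x_j$ ($j\in N$) are the coefficients in this representation. It is assumed that $\bar x\notin\mathrm{cl}(C)$. For $j\in N$, $\alpha_j=\inf\{\lambda\ge0:\bar x+\lambda\bar r^j\in C\}$ and $\beta_j=\sup\{\lambda\ge0:\bar x+\lambda\bar r^j\in C\}$, with $\alpha_j=+\infty$, $\beta_j=-\infty$ if the halfline misses $C$. Define - $N_0=\{j:\alpha_j=+\infty,\beta_j=-\infty\}$;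 - $N_1=\{j:\alpha_j\in(0,\infty),\beta_j=+\infty\}$; - $N_2=\{j:\alpha_j\in(0,\infty),\beta_j\in(\alpha_j,\infty)\}$. For a set $K$, $\mathrm{recc}(K)=\{d:x+\lambda d\in K\ \forall x\in K,\lambda\ge0\}$. We use the convention $t/+\infty=0$. For $k\in N_2$, let $S_k^C=\{\bar x\}+\mathrm{conv}\big(\bigcup_{j\in N_2}\{\lambda\bar r^j:0\le\lambda<\beta_j\}\big)+\{\lambda\bar r^k:\lambda\le0\}+\mathrm{recc}(C)$. Let $J=\{i\in N:\bar r^i\in\mathrm{recc}(S_k^C)\}$. For $i\in J$ and $j\in N\setminus J$, let $\gamma'_{ij}=\sup\{\gamma\ge0:\bar r^i+\gamma\bar r^j\in\mathrm{recc}(S_k^C)\}$. Let $M'=\{i\in J:\gamma'_{ij}>0\ \forall j\in N\setminus J\}$. For $S\subseteq M'$ and $j\in N\setminus J$, $\varepsilon'_j(S)=\min_{i\in S}\gamma'_{ij}$ if $S\ne\emptyset$, and $+\infty$ otherwise. *)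

(* Defs.v *)
From HB Require Import structures.
From mathcomp Require Import all_boot all_order all_algebra.
From mathcomp Require Import all_classical all_reals all_analysis.
Set Implicit Arguments. Unset Strict Implicit. Unset Printing Implicit Defensive.
Import Order.TTheory GRing.Theory Num.Theory.
Import numFieldNormedType.Exports.
Local Open Scope classical_set_scope.
Local Open Scope ring_scope.

Section Defs.
Variable R : realType.
Variables m n : nat.

Definition xco (x : 'cV[R]_n) (i : 'I_n) : R := x i 0.

Definition recc (K : set 'cV[R]_n) : set 'cV[R]_n :=
  [set d | forall x, K x -> forall l : R, 0 <= l -> K (x + l *: d)].

Definition msum (X Y : set 'cV[R]_n) : set 'cV[R]_n :=
  [set z | exists x, X x /\ exists y, Y y /\ z = x + y].

Definition conv_hull (X : set 'cV[R]_n) : set 'cV[R]_n :=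
  [set y | exists (p : nat) (t : 'I_p -> R) (z : 'I_p -> 'cV[R]_n),
     (forall i, 0 <= t i) /\ \sum_(i < p) t i = 1 /\ (forall i, X (z i)) /\
     y = \sum_(i < p) t i *: z i].

(* --- Simplex tableau data attached to a basis ---
   A basis is given by an injective enumeration bas : 'I_m -> 'I_n of the basic
   variables, with A_B = colsub bas A invertible. *)
Variable A : 'M[R]_(m, n).
Variable b : 'cV[R]_m.
Variable bas : 'I_m -> 'I_n.

Definition AB : 'M[R]_m := colsub bas A.
Definition Abar : 'M[R]_(m, n) := invmx AB *m A.   (* abar_{bas p, j} = Abar p j *)
Definition bbar : 'cV[R]_m := invmx AB *m b.       (* bbar_{bas p} = bbar p 0 *)

Definition Bset : {set 'I_n} := [set bas p | p : 'I_m].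
Definition Nset : {set 'I_n} := ~: Bset.

Definition Ppoly : set 'cV[R]_n :=
  [set x | A *m x = b /\ forall i, 0 <= xco x i].

(* P^B: the tableau system with the constraints x_i >= 0, i in B, dropped *)
Definition PB : set 'cV[R]_n :=
  [set x | (forall p : 'I_m,
             xco x (bas p) = bbar p 0 - \sum_(j in Nset) Abar p j * xco x j)
         /\ (forall j, j \in Nset -> 0 <= xco x j)].

Definition xbar : 'cV[R]_n := \sum_(p < m) bbar p 0 *: delta_mx (bas p) 0.
Definition rbar (j : 'I_n) : 'cV[R]_n :=
  delta_mx j 0 - \sum_(p < m) Abar p j *: delta_mx (bas p) 0.

Variable C : set 'cV[R]_n.

Local Open Scope ereal_scope.
Definition alpha (j : 'I_n) : \bar R :=
  ereal_inf [set l%:E | l in [set l : R | (0 <= l)%R /\ C (xbar + l *: rbar j)%R]].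
Definition beta (j : 'I_n) : \bar R :=
  ereal_sup [set l%:E | l in [set l : R | (0 <= l)%R /\ C (xbar + l *: rbar j)%R]].

Definition N0 : {set 'I_n} :=
  [set j in Nset | (alpha j == +oo) && (beta j == -oo)].
Definition N1 : {set 'I_n} :=
  [set j in Nset | [&& 0 < alpha j, alpha j < +oo & beta j == +oo]].
Definition N2 : {set 'I_n} :=
  [set j in Nset | [&& 0 < alpha j, alpha j < +oo, alpha j < beta j
                     & beta j < +oo]].
Local Close Scope ereal_scope.

Variable k : 'I_n.

Definition SkC : set 'cV[R]_n :=
  msum (msum (msum [set xbar]
     (conv_hull [set v | exists2 j, j \in N2 &
                   exists l : R, [/\ 0 <= l, (l%:E < beta j)%E & v = l *: rbar j]]))
     [set v | exists l : R, l <= 0 /\ v = l *: rbar k])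
   (recc C).

Definition Jset : {set 'I_n} :=
  [set i in Nset | `[< recc SkC (rbar i) >]].

Local Open Scope ereal_scope.
Definition gam' (i j : 'I_n) : \bar R :=
  ereal_sup [set g%:E | g in [set g : R | (0 <= g)%R /\ recc SkC (rbar i + g *: rbar j)%R]].

Definition Mset' : {set 'I_n} :=
  [set i in Jset | [forall j in Nset :\: Jset, 0 < gam' i j]].

Definition eps' (S : {set 'I_n}) (j : 'I_n) : \bar R :=
  \big[Order.min/+oo]_(i in S) gam' i j.
Local Close Scope ereal_scope.

(* t / e with the convention t / +oo = 0 *)
Definition edivr (t : R) (e : \bar R) : R :=
  match e with EFin r => t / r | _ => 0 end.

End Defs.

(* Main.v *)
Require Import Defs.
From HB Require Import structures.
From mathcomp Require Import all_boot all_order all_algebra.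
From mathcomp Require Import all_classical all_reals all_analysis.
From mathcomp Require Import ring lra.
Import Order.TTheory GRing.Theory Num.Theory.
Import numFieldNormedType.Exports.
Local Open Scope classical_set_scope.
Local Open Scope ring_scope.

Section Aux.
Variable R : realType.
Variable n : nat.
Implicit Types K : set 'cV[R]_n.

Lemma recc0 K : recc K 0.
Proof. by move=> x Kx l _; rewrite scaler0 addr0. Qed.

Lemma reccD K d1 d2 : recc K d1 -> recc K d2 -> recc K (d1 + d2).
Proof.
move=> h1 h2 x Kx l l0; rewrite scalerDr addrA; apply: h2 => //; exact: h1.
Qed.

Lemma reccZ K c d : 0 <= c -> recc K d -> recc K (c *: d).
Proof.
move=> c0 h x Kx l l0; rewrite scalerA; apply: h => //; exact: mulr_ge0.
Qed.

Lemma recc_sum K (I : finType) (P : pred I) (F : I -> 'cV[R]_n) :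
  (forall i, P i -> recc K (F i)) -> recc K (\sum_(i | P i) F i).
Proof.
move=> h; apply: (big_ind (recc K)); [exact: recc0| exact: reccD| exact: h].
Qed.
End Aux.

Section Main.
Variable R : realType.
Variables m n : nat.
Variable A : 'M[R]_(m, n).
Variable b : 'cV[R]_m.
Variable bas : 'I_m -> 'I_n.
Variable C : set 'cV[R]_n.
Variable k : 'I_n.
Hypothesis basI : injective bas.

Lemma delta_sum (f : 'I_m -> R) (a : 'I_n) :
  (\sum_(p < m) f p *: (delta_mx (bas p) 0 : 'cV[R]_n)) a 0 =
  \sum_(p < m) f p * (a == bas p)%:R.
Proof.
rewrite summxE; apply: eq_bigr => p _; rewrite !mxE eqxx andbT //.
Qed.

Lemma delta_sum_bas (f : 'I_m -> R) q :
  \sum_(p < m) f p * (bas q == bas p)%:R = f q.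
Proof.
rewrite (bigD1 q) //= eqxx mulr1 big1 ?addr0 // => p pq.
by rewrite (inj_eq basI) eq_sym (negbTE pq) mulr0.
Qed.

Lemma delta_sum_N (f : 'I_m -> R) a : a \in Nset bas ->
  \sum_(p < m) f p * (a == bas p)%:R = 0.
Proof.
rewrite inE => aN; rewrite big1 // => p _.
case: eqP => [e|]; last by rewrite mulr0.
by move: aN; rewrite e /Bset imset_f.
Qed.


Lemma PB_decomp x : PB A b bas x ->
  x = xbar A b bas + \sum_(j in Nset bas) xco x j *: rbar A bas j.
Proof.
case=> hB hN; apply/matrixP => a c; rewrite (ord1 c) {c}.
rewrite mxE /xbar delta_sum summxE.
have rb j a' : rbar A bas j a' 0 = (a' == j)%:R - \sum_(p < m) Abar A bas p j * (a' == bas p)%:R.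
  by rewrite /rbar !mxE delta_sum andbT.
case: (boolP (a \in Bset bas)) => [/imsetP [q _ ->]|aB].
- rewrite delta_sum_bas -/(xco x (bas q)) hB; congr (_ + _).
  rewrite -sumrN; apply: eq_bigr => j jN; rewrite [(_ *: rbar _ _ _) _ _]mxE rb delta_sum_bas.
  have -> : (bas q == j) = false.
    by apply/negbTE/eqP => e; move: jN; rewrite -e inE /Bset imset_f.
  by rewrite sub0r mulrN /xco mulrC.
- have aN : a \in Nset bas by rewrite inE.
  rewrite delta_sum_N // add0r -/(xco x a) (bigD1 a) //= big1 ?addr0.
    by rewrite [(_ *: rbar _ _ _) _ _]mxE rb eqxx delta_sum_N // subr0 mulr1.
  move=> j /andP [jN ja]; rewrite [(_ *: rbar _ _ _) _ _]mxE rb delta_sum_N // subr0.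
  by rewrite eq_sym (negbTE ja) mulr0.
Qed.


Lemma xbar_SkC : k \in N2 A b bas C -> SkC A b bas C k (xbar A b bas).
Proof.
move=> hk; have := hk; rewrite inE => /and5P [kN a0 _ ab _].
have b0 : (0%:E < beta A b bas C k)%E by exact: lt_trans ab.
rewrite /SkC /msum /=.
exists (xbar A b bas + 0 + 0); split; last first.
  by exists 0; split; [exact: recc0 | rewrite !addr0].
exists (xbar A b bas + 0); split; last first.
  by exists 0; split; [exists 0; rewrite scale0r lexx | rewrite addr0].
exists (xbar A b bas); split => //; exists 0; split; last by rewrite addr0.
exists 1%N, (fun _ => 1), (fun _ => 0); split; first by move=> _; exact: ler01.
split; first by rewrite big_ord1.
split; last by rewrite big_ord1 scale1r.
move=> _; exists k => //; last first.
  by exists 0; split => //; rewrite scale0r.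
Qed.

Lemma gam_recc i j g : i \in Jset A b bas C k -> 0 <= g ->
  (g%:E < gam' A b bas C k i j)%E ->
  recc (SkC A b bas C k) (rbar A bas i + g *: rbar A bas j).
Proof.
rewrite inE => /andP [_ /asboolP hi] g0 /ereal_sup_gt [y [g' [_ hg'] <-]].
rewrite lte_fin => gg'.
have g'0 : 0 < g' by exact: le_lt_trans gg'.
have -> : rbar A bas i + g *: rbar A bas j =
   (g / g') *: (rbar A bas i + g' *: rbar A bas j) + (1 - g / g') *: rbar A bas i.
  rewrite [(g / g') *: _]scalerDr scalerA divfK ?gt_eqF // [(1 - _) *: _]scalerBl scale1r.
  set u := rbar A bas i; set v := g *: _; set w := (g / g') *: u.
  by rewrite [RHS]addrAC [w + (u - w)]addrC subrK.
apply: reccD; apply: reccZ => //.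
- by rewrite divr_ge0 // ltW.
- by rewrite subr_ge0 ler_pdivrMr // mul1r ltW.
Qed.

End Main.

Theorem theorem6 (R : realType) (m n : nat) (A : 'M[R]_(m, n)) (b : 'cV[R]_m)
    (bas : 'I_m -> 'I_n) (C : set 'cV[R]_n) (k : 'I_n) (S : {set 'I_n})
    (x : 'cV[R]_n) :
  \rank A = m ->
  injective bas ->
  AB A bas \in unitmx ->
  (forall p, 0 <= bbar A b bas p 0) ->
  open C -> convex_set C ->
  ~ closure C (xbar A b bas) ->
  recc C `<=` recc (PB A b bas) ->
  k \in N2 A b bas C ->
  ~~ (N0 A b bas C \subset Jset A b bas C k) ->
  S \subset Mset' A b bas C k ->
  PB A b bas x -> ~ SkC A b bas C k x ->
  \sum_(i in S) xco x i
    - \sum_(j in Nset bas :\: Jset A b bas C k) edivr (xco x j) (eps' A b bas C k S j)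
    <= 0.
Proof.
move=> _ basI _ _ _ _ _ _ hk _ SM hx nS.
rewrite leNgt; apply/negP => hlt; apply: nS.
set K := SkC A b bas C k.
set J := Jset A b bas C k.
set NJ := Nset bas :\: J.
set r := rbar A bas.
set eps := eps' A b bas C k S.
set e := fun j => edivr (xco x j) (eps j).
set s := \sum_(i in S) xco x i.
set E := \sum_(j in NJ) e j.
have hN : forall j, j \in Nset bas -> 0 <= xco x j by case: hx.
have JN : J \subset Nset bas by apply/fintype.subsetP => i; rewrite inE => /andP [].
have SJ : S \subset J.
  by apply/fintype.subsetP => i /(fintype.subsetP SM); rewrite inE => /andP [].
have hJ : forall i, i \in J -> recc K (r i).
  by move=> i; rewrite inE => /andP [_ /asboolP].
have hgam : forall i j, i \in S -> j \in NJ -> (0 < gam' A b bas C k i j)%E.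
  move=> i j /(fintype.subsetP SM); rewrite inE => /andP [_ /forallP h] jNJ.
  by have := h j; rewrite jNJ.
have eps_pos : forall j, j \in NJ -> (0 < eps j)%E.
  move=> j jNJ; apply: lt_bigmin; first exact: ltry.
  by move=> i iS; apply: hgam.
have eps_le : forall i j, i \in S -> (eps j <= gam' A b bas C k i j)%E.
  by move=> i j iS; apply: bigmin_le_cond.
have jN : forall j, j \in NJ -> j \in Nset bas by move=> j; rewrite inE => /andP [].
have e_ge0 : forall j, j \in NJ -> 0 <= e j.
  move=> j jNJ; rewrite /e; have := eps_pos j jNJ.
  case: (eps j) => [t||] //= t0; rewrite divr_ge0 ?hN ?jN //.
  by rewrite ltW // -lte_fin.
have E0 : 0 <= E by apply: sumr_ge0.
set d := s - E.
have d0 : 0 < d by rewrite subr_gt0 -subr_gt0.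
have s0 : 0 < s by rewrite /d in d0; lra.
set eta := d / (#|NJ|%:R + 1).
have eta0 : 0 < eta by rewrite divr_gt0 // ltr_wpDl.
have epos : forall j, j \in NJ -> 0 < e j + eta.
  by move=> j jNJ; rewrite ltr_wpDl // e_ge0.
set g := fun j => xco x j / (e j + eta).
have hg : forall i j, i \in S -> j \in NJ -> ((g j)%:E < gam' A b bas C k i j)%E.
  move=> i j iS jNJ; have := eps_le i j iS; have := eps_pos j jNJ.
  move: (epos j jNJ); rewrite /g /e; case: (eps j) => [t||] //= ep t0 hle.
    apply: lt_le_trans hle; rewrite lte_fin ltr_pdivrMr //.
    rewrite lte_fin in t0.
    rewrite mulrDr mulrCA divff ?gt_eqF // mulr1 ltrDl mulr_gt0 //.
  by apply: lt_le_trans hle; exact: ltry.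
set U := \sum_(j in NJ) xco x j *: r j.
set t := fun j => (e j + eta) / s.
set T := \sum_(j in NJ) t j.
have T1 : T <= 1.
  rewrite /T /t -mulr_suml big_split /= sumr_const -/E ler_pdivrMr // mul1r.
  rewrite -/s; have -> : s = E + d by rewrite /d; lra.
  rewrite lerD2l -(mulr_natl eta) /eta mulrA ler_pdivrMr ?ltr_wpDl //.
  nra.
have hW : forall i, i \in S -> recc K (r i + s^-1 *: U).
  move=> i iS.
  have -> : r i + s^-1 *: U = \sum_(j in NJ) t j *: (r i + g j *: r j) + (1 - T) *: r i.
    rewrite (eq_bigr (fun j => t j *: r i + (xco x j / s) *: r j)); last first.
      move=> j jNJ; rewrite scalerDr scalerA; congr (_ + _ *: _).
      rewrite /t /g; field; apply/andP; split; rewrite gt_eqF //; exact: epos.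
    rewrite big_split /= -scaler_suml -/T /U scaler_sumr.
    rewrite (eq_bigr (fun j => xco x j / s *: r j)); last first.
      by move=> j _; rewrite scalerA mulrC.
    set Y := \sum_(j in NJ) _.
    rewrite scalerBl scale1r.
    set u := r i; set w := T *: u.
    by rewrite [RHS]addrAC subrKC.
  apply: reccD; last by apply: reccZ; [rewrite subr_ge0| apply: hJ; exact: (fintype.subsetP SJ)].
  apply: recc_sum => j jNJ; apply: reccZ; first by rewrite ltW // divr_gt0 // epos.
  apply: gam_recc; first exact: (fintype.subsetP SJ).
    by rewrite divr_ge0 ?hN ?jN // ltW // epos.
  exact: hg.
have hV : recc K (\sum_(i in S) xco x i *: r i + U).
  have -> : \sum_(i in S) xco x i *: r i + U = \sum_(i in S) xco x i *: (r i + s^-1 *: U).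
    rewrite [RHS](eq_bigr (fun i => xco x i *: r i + xco x i *: (s^-1 *: U))); last first.
      by move=> i _; rewrite scalerDr.
    by rewrite big_split /= -scaler_suml -/s scalerA divff ?gt_eqF // scale1r.
  apply: recc_sum => i iS; apply: reccZ; last exact: hW.
  by apply: hN; apply: (fintype.subsetP JN); apply: (fintype.subsetP SJ).
have hrest : recc K (\sum_(i in J :\: S) xco x i *: r i).
  apply: recc_sum => i; rewrite inE => /andP [_ iJ]; apply: reccZ; last exact: hJ.
  by apply: hN; apply: (fintype.subsetP JN).
have decomp := @PB_decomp R m n A b bas basI x hx.
rewrite (big_setID J) /= (elimT finset.setIidPr JN) (big_setID S) /=
   (elimT finset.setIidPr SJ) -/r -/U in decomp.
have hd : recc K (\sum_(i in J :\: S) xco x i *: r i + (\sum_(i in S) xco x i *: r i + U)).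
  exact: reccD.
have := hd _ (@xbar_SkC R m n A b bas C k hk) 1 ler01.
rewrite scale1r => h; rewrite decomp -addrA addrCA; exact: h.
Qed.
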